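(* Let $(E,\rho)$ be a weighted space and $\ell:\mathscr{B}^\rho(E)\to\mathbb{R}$ a continuous linear functional. Then $\ell$ is a smooth algebra homomorphism if and only if there exists $x\in E$ with $\ell(f)=f(x)$ for all $f\in\mathscr{B}^\rho(E)$. The point $x$ is uniquely determined by $\ell$.
   Context: A weighted space is a pair $(E,\rho)$ where $E$ is a completely regular Hausdorff topological space and $\rho:E\to(0,\infty)$ is an admissible weight function, meaning that for every $R\ge 0$ the sublevel set $K_R:=\{x\in E:\rho(x)\le R\}$ is compact. For $f:E\to\mathbb{R}$ put $\|f\|_\rho:=\sup_{x\in E}|f(x)|/\rho(x)$; $\mathscr{B}^\rho(E)$ denotes the closure of $C_b(E)$ with respect to $\|\cdot\|_\rho$ inside $\{f:E\to\mathbb{R}:\|f\|_\rho<\infty\}$. A continuous linear functional $\ell$ on $\mathscr{B}^\rho(E)$ is a smooth algebra homomorphism if for every $n$, every bounded smooth $\phi:\mathbb{R}^n\to\mathbb{R}$ and all $f_1,\dots,f_n\in\mathscr{B}^\rho(E)$ one has $\ell(\phi(f_1(\cdot),\dots,f_n(\cdot)))=\phi(\ell(f_1),\dots,\ell(f_n))$. *)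

(* Defs.v *)
From HB Require Import structures.
From mathcomp Require Import all_boot all_order all_algebra.
From mathcomp Require Import all_classical all_reals all_analysis.
Set Implicit Arguments. Unset Strict Implicit. Unset Printing Implicit Defensive.
Import Order.TTheory GRing.Theory Num.Theory.
Import numFieldNormedType.Exports.
Local Open Scope classical_set_scope.
Local Open Scope ring_scope.

Definition admissible_weight (R : realType) (E : topologicalType) (rho : E -> R) :=
  (forall x, 0 < rho x) /\ (forall r : R, compact [set x | rho x <= r]).

(* ||h||_rho <= c, written out: |h x| <= c * rho x for all x. *)
Definition wbound (R : realType) (E : topologicalType) (rho : E -> R)
  (h : E -> R) (c : R) := forall x, `|h x| <= c * rho x.

Definition Cb (R : realType) (E : topologicalType) : set (E -> R) :=
  [set g | continuous g /\ exists M : R, forall x, `|g x| <= M].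

(* B^rho(E): closure of C_b(E) w.r.t. ||.||_rho inside {f | ||f||_rho < oo}. *)
Definition Brho (R : realType) (E : topologicalType) (rho : E -> R) : set (E -> R) :=
  [set f | (exists c : R, wbound rho f c) /\
     forall eps : R, 0 < eps -> exists g : E -> R, Cb g /\ wbound rho (f \- g) eps].

(* l is a continuous linear functional on B^rho(E) (values of l outside
   B^rho(E) are irrelevant). *)
Definition cont_lin_functional (R : realType) (E : topologicalType) (rho : E -> R)
  (l : (E -> R) -> R) :=
  (forall (a : R) f g, Brho rho f -> Brho rho g ->
      l (fun x => a * f x + g x) = a * l f + l g) /\
  (forall f, Brho rho f -> forall eps : R, 0 < eps -> exists2 delta : R, 0 < delta &
      forall g, Brho rho g -> wbound rho (g \- f) delta -> `|l g - l f| < eps).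

Fixpoint Ck (R : realType) (n : nat) (k : nat) (phi : 'rV[R]_n -> R) : Prop :=
  match k with
  | 0 => continuous phi
  | k'.+1 => (forall v, differentiable phi v) /\
             forall u : 'rV[R]_n, Ck k' (fun v => derive phi v u)
  end.

Definition smooth (R : realType) (n : nat) (phi : 'rV[R]_n -> R) :=
  forall k, Ck k phi.

Definition smooth_algebra_hom (R : realType) (E : topologicalType) (rho : E -> R)
  (l : (E -> R) -> R) :=
  forall (n : nat) (phi : 'rV[R]_n -> R) (f : 'I_n -> (E -> R)),
    smooth phi -> (exists M : R, forall v, `|phi v| <= M) ->
    (forall i, Brho rho (f i)) ->
    l (fun x => phi (\row_i f i x)) = phi (\row_i l (f i)).

(* Main.v *)
Require Import Defs.
From HB Require Import structures.
From mathcomp Require Import all_boot all_order all_algebra.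
From mathcomp Require Import all_classical all_reals all_analysis.
From mathcomp Require Import ring lra.
Set Implicit Arguments. Unset Strict Implicit. Unset Printing Implicit Defensive.
Import Order.TTheory GRing.Theory Num.Theory.
Import numFieldNormedType.Exports.
Local Open Scope classical_set_scope.
Local Open Scope ring_scope.


Inductive Pf (R : realType) (n : nat) : ('rV[R]_n -> R) -> Prop :=
| Pcst c : Pf (fun _ => c)
| Pcoord i : Pf (fun v => v ord0 i)
| Padd f g : Pf f -> Pf g -> Pf (fun v => f v + g v)
| Pmul f g : Pf f -> Pf g -> Pf (fun v => f v * g v)
| Psin f : Pf f -> Pf (fun v => sin (f v))
| Pcos f : Pf f -> Pf (fun v => cos (f v)).

Lemma Pf_diff (R : realType) n (f : 'rV[R]_n -> R) : Pf f -> forall v, differentiable f v.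
Proof.
elim => {f}.
- by move=> c v; exact: differentiable_cst.
- by move=> i v; exact: differentiable_coord.
- by move=> f g _ Hf _ Hg v; exact: differentiableD.
- by move=> f g _ Hf _ Hg v; exact: differentiableM.
- move=> f _ Hf v; apply: (@differentiable_comp _ _ _ _ f sin).
    exact: Hf.
  exact/derivable1_diffP/derivable_sin.
- move=> f _ Hf v; apply: (@differentiable_comp _ _ _ _ f cos).
    exact: Hf.
  exact/derivable1_diffP/derivable_cos.
Qed.

Lemma derive_coord (R : realType) n (i : 'I_n) (v u : 'rV[R]_n) :
  'D_u (fun w : 'rV[R]_n => w ord0 i) v = u ord0 i.
Proof.
have @f : {linear 'rV[R]_n -> R}.
  by exists (fun N : 'rV[R]_n => N ord0 i); do 2![eexists]; do ?[constructor];
     rewrite ?mxE// => ? *; rewrite ?mxE//; move=> ?; rewrite !mxE.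
rewrite (_ : (fun _ => _) = f) //.
rewrite deriveE; last exact/linear_differentiable/coord_continuous.
by rewrite diff_lin //; exact: coord_continuous.
Qed.

Lemma derive_comp1 (R : realType) n (f : 'rV[R]_n -> R) (g dg : R -> R) (v u : 'rV[R]_n) :
  differentiable f v -> (forall t : R, is_derive t (1:R) g (dg t)) ->
  'D_u (fun w => g (f w)) v = 'D_u f v * dg (f v).
Proof.
move=> df hg.
have dgf : differentiable g (f v).
  by apply/derivable1_diffP; exact: ex_derive.
rewrite (_ : (fun w => g (f w)) = g \o f) //.
rewrite deriveE; last exact: differentiable_comp.
rewrite diff_comp // /= deriv1E; last exact: ex_derive.
by rewrite derive1E derive_val -deriveE.
Qed.

Lemma Pf_eq (R : realType) n (g f : 'rV[R]_n -> R) : Pf g -> (forall v, g v = f v) -> Pf f.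
Proof. by move=> Pg e; rewrite (_ : f = g) //; apply/funext => v; rewrite e. Qed.


Lemma Pf_derive (R : realType) n (f : 'rV[R]_n -> R) : Pf f -> forall u, Pf (fun v => 'D_u f v).
Proof.
move=> Pff u; elim: Pff => {f}.
- move=> c; apply: (Pf_eq (Pcst _ 0)) => v.
  by rewrite (derive_cst c).
- move=> i; apply: (Pf_eq (Pcst _ (u ord0 i))) => v.
  by rewrite derive_coord.
- move=> f g Pff Hf Pg Hg.
  apply: (Pf_eq (Padd Hf Hg)) => v.
  rewrite (_ : (fun v => f v + g v) = f + g) //.
  by rewrite deriveD //; apply: diff_derivable; exact: Pf_diff.
- move=> f g Pff Hf Pg Hg.
  apply: (Pf_eq (Padd (Pmul Pff Hg) (Pmul Pg Hf))) => v.
  rewrite (_ : (fun v => f v * g v) = f * g) //.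
  by rewrite deriveM //; apply: diff_derivable; exact: Pf_diff.
- move=> f Pff Hf.
  apply: (Pf_eq (Pmul Hf (Pcos Pff))) => v.
  by rewrite (derive_comp1 u (Pf_diff Pff v) (@is_derive_sin R)).
- move=> f Pff Hf.
  apply: (Pf_eq (Pmul Hf (Pmul (Pcst _ (-1)) (Psin Pff)))) => v.
  by rewrite mulN1r (derive_comp1 u (Pf_diff Pff v) (@is_derive_cos R)).
Qed.

Lemma Pf_Ck (R : realType) n k (f : 'rV[R]_n -> R) : Pf f -> Ck k f.
Proof.
elim: k f => [|k IH] f Pff /=.
  by move=> v; apply: differentiable_continuous; exact: Pf_diff.
split; first exact: Pf_diff.
by move=> u; apply: IH; exact: Pf_derive.
Qed.

Lemma Pf_smooth (R : realType) n (f : 'rV[R]_n -> R) : Pf f -> smooth f.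
Proof. by move=> Pff k; exact: Pf_Ck. Qed.

Lemma Pf_sum (R : realType) n (I : Type) (r : seq I) (F : I -> 'rV[R]_n -> R) :
  (forall i, Pf (F i)) -> Pf (fun v => \sum_(i <- r) F i v).
Proof.
move=> hF; elim: r => [|i r IH].
  by apply: (Pf_eq (Pcst _ 0)) => v; rewrite big_nil.
by apply: (Pf_eq (Padd (hF i) IH)) => v; rewrite big_cons.
Qed.

Lemma Pf_pow (R : realType) n (f : 'rV[R]_n -> R) m : Pf f -> Pf (fun v => f v ^+ m).
Proof.
move=> hf; elim: m => [|m IH].
  by apply: (Pf_eq (Pcst _ 1)) => v; rewrite expr0.
by apply: (Pf_eq (Pmul hf IH)) => v; rewrite exprS.
Qed.

Lemma row_continuous (R : realType) (E : topologicalType) n (f : 'I_n -> E -> R) :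
  (forall j, continuous (f j)) -> continuous (fun x => \row_j f j x).
Proof.
move=> cf x; apply/cvg_ballP => e e0.
have H : forall j : 'I_n, \forall y \near x, ball (f j x) e (f j y).
  by move=> j; move: (cf j x) => /cvg_ballP; apply.
near=> y.
have Hy : forall j, ball (f j x) e (f j y) by near: y; exact: filter_forall.
by split => // i j; rewrite !mxE; exact: Hy.
Unshelve. all: by end_near.
Qed.

Lemma coord_le_norm (R : realType) n (v : 'rV[R]_n) i : `|v ord0 i| <= `|v|.
Proof.
have /mapP[j Hj ->] : `|v ord0 i| \in [seq `|v x.1 x.2| | x : 'I_1 * 'I_n].
  by apply/mapP; exists (ord0, i) => //=; rewrite mem_enum.
by rewrite [leRHS]/Num.norm /= mx_normrE; apply/bigmax_geP; right => /=; exists j.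
Qed.

Lemma norm_le_coord (R : realType) n (v : 'rV[R]_n) c :
  0 <= c -> (forall i, `|v ord0 i| <= c) -> `|v| <= c.
Proof.
move=> c0 H; rewrite [leLHS]/Num.norm /= mx_normrE; apply/bigmax_leP; split => //.
by move=> [i j] _ /=; rewrite (ord1 i); exact: H.
Qed.

Lemma directed_cluster (T : topologicalType) (K : set T) (I : Type) (S : I -> set T) (i0 : I) :
  compact K -> (forall i j, exists k, S k `<=` S i `&` S j) -> (forall i, S i !=set0) ->
  S i0 `<=` K ->
  exists2 x, K x & forall i B, closed B -> S i `<=` B -> B x.
Proof.
move=> Kc dir ne SK.
pose F := fun A => exists i, S i `<=` A.
have PF : ProperFilter F.
  constructor.
    by move=> [i Hi]; case: (ne i) => x /Hi.
  constructor.
  - by exists i0.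
  - move=> A B [i Ai] [j Bj]; case: (dir i j) => k Hk; exists k => y /Hk [/Ai ? /Bj ?].
    by split.
  - by move=> A B AB [i Ai]; exists i => y /Ai /AB.
have FK : F K by exists i0.
case: (Kc F PF FK) => x [Kx clx]; exists x => // i B cB SB.
apply: contrapT => nBx.
have NB : nbhs x (~` B).
  by apply: open_nbhs_nbhs; split => //; rewrite openC.
have : S i `&` ~` B !=set0 by apply: clx => //; exists i.
by case=> y [/SB].
Qed.

Lemma inv1_le (R : realType) (i k : R) : `|i| <= `|k| -> (1 + `|k|)^-1 <= (1 + `|i|)^-1.
Proof.
move=> h; rewrite lef_pV2 ?posrE ?ltr_pwDl //.
by rewrite lerD2l.
Qed.

Lemma inv1_gt0 (R : realType) (i : R) : 0 < (1 + `|i|)^-1.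
Proof. by rewrite invr_gt0 ltr_pwDl. Qed.

Lemma rho_min (R : realType) (E : topologicalType) (rho : E -> R) :
  hausdorff_space E -> admissible_weight rho -> exists2 m, 0 < m & forall x, m <= rho x.
Proof.
move=> hE [rpos rcomp]; apply: contrapT => H.
have H' : forall m, 0 < m -> exists x, rho x < m.
  move=> m m0; apply: contrapT => nx; apply: H; exists m => // x.
  by rewrite leNgt; apply/negP => hx; apply: nx; exists x.
pose S (d : R) := [set x | rho x <= (1 + `|d|)^-1].
have [x Kx clx] : exists2 x, [set x | rho x <= 1] x &
    forall i B, closed B -> S i `<=` B -> B x.
  apply: (@directed_cluster _ _ _ S 0) => //.
  - move=> i j; exists (`|i| + `|j|) => y /= hy; split.
      apply: (le_trans hy); apply: inv1_le.
      by rewrite [`|_ + _|]ger0_norm ?addr_ge0 // lerDl.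
    apply: (le_trans hy); apply: inv1_le.
    by rewrite [`|_ + _|]ger0_norm ?addr_ge0 // lerDr.
  - move=> i; case: (H' _ (inv1_gt0 i)) => y hy; exists y.
    by rewrite /S /=; apply: ltW.
  - by move=> y; rewrite /S /= normr0 addr0 invr1.
have := clx ((rho x)^-1) (S ((rho x)^-1)) (compact_closed hE (rcomp _)) (fun _ h => h).
rewrite /S /= => hx.
have rx := rpos x.
have : rho x * (1 + `|(rho x)^-1|) <= 1.
  by rewrite -ler_pdivlMr ?ltr_pwDl // div1r.
rewrite gtr0_norm ?invr_gt0 // mulrDr mulr1 mulfV ?gt_eqF //.
by move=> h; lra.
Qed.

Lemma Brho0 (R : realType) (E : topologicalType) (rho : E -> R) :
  admissible_weight rho -> Brho rho (fun _ => 0).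
Proof.
move=> [rpos _]; split.
  by exists 0 => x; rewrite normr0 mul0r.
move=> e e0; exists (fun _ => 0); split.
  by split; [exact: cst_continuous | exists 0 => x; rewrite normr0].
by move=> x; rewrite /= subr0 normr0 mulr_ge0 // ltW.
Qed.

Lemma l0 (R : realType) (E : topologicalType) (rho : E -> R) l :
  admissible_weight rho -> cont_lin_functional rho l -> l (fun _ => 0) = 0.
Proof.
move=> ha [lin _]; have B0 := Brho0 ha.
have := lin 1 _ _ B0 B0.
rewrite (_ : (fun x => 1 * 0 + 0) = fun _ => 0); last by apply/funext => x; rewrite mul1r addr0.
by rewrite mul1r => h; lra.
Qed.

Lemma Cb_Brho (R : realType) (E : topologicalType) (rho : E -> R) g :
  (exists2 m, 0 < m & forall x, m <= rho x) -> Cb g -> Brho rho g.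
Proof.
move=> [m m0 hm] [gc [M hM]]; split.
  exists (M / m) => x.
  have M0 : 0 <= M by apply: le_trans (hM x).
  apply: (le_trans (hM x)).
  apply: (@le_trans _ _ (M / m * m)); first by rewrite divfK ?gt_eqF.
  apply: ler_wpM2l; last exact: hm.
  by rewrite divr_ge0 // ltW.
move=> e e0; exists g; split; first by split => //; exists M.
move=> x; rewrite /= subrr normr0 mulr_ge0 ?ltW //.
by apply: lt_le_trans (hm x).
Qed.

Lemma l_small (R : realType) (E : topologicalType) (rho : E -> R) l :
  admissible_weight rho -> cont_lin_functional rho l ->
  exists2 d, 0 < d & forall g, Brho rho g -> wbound rho g d -> `|l g| < 1.
Proof.
move=> ha hl; have l00 := l0 ha hl; case: hl => _ cont.
case: (cont _ (Brho0 ha) 1 ltr01) => d d0 hd; exists d => // g Bg wg.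
have := hd g Bg; rewrite l00 subr0; apply => x.
by rewrite /= subr0; exact: wg.
Qed.

Lemma Cb_ext (R : realType) (E : topologicalType) (rho : E -> R) l x :
  admissible_weight rho -> cont_lin_functional rho l ->
  (exists2 m, 0 < m & forall x, m <= rho x) ->
  (forall g, Cb g -> l g = g x) -> forall f, Brho rho f -> l f = f x.
Proof.
move=> [rpos rc] [_ cont] hm hg f Bf.
apply/subr0_eq/eqP; rewrite -normr_le0; apply/ler_addgt0Pr => e e0; rewrite add0r.
have e20 : 0 < e / 2 by rewrite divr_gt0.
case: (cont f Bf _ e20) => d d0 hd.
have rx := rpos x.
pose e' := Num.min d (e / 2 / rho x).
have e'0 : 0 < e' by rewrite lt_min d0 divr_gt0.
case: Bf => _ /(_ _ e'0) [g [Cg wg]].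
have Bg := Cb_Brho hm Cg.
have h1 : `|l g - l f| < e / 2.
  apply: hd => // y; rewrite /= distrC.
  apply: (le_trans (wg y)); apply: ler_wpM2r; first exact: ltW.
  by rewrite ge_min lexx.
have h2 : `|g x - f x| <= e / 2.
  rewrite distrC; apply: (le_trans (wg x)).
  rewrite -ler_pdivlMr // /e'; by rewrite ge_min lexx orbT.
rewrite (hg g Cg) in h1.
have -> : l f - f x = (g x - f x) - (g x - l f) by ring.
apply: (le_trans (ler_normB _ _)).
lra.
Qed.

Lemma cos_le_mono (R : realType) (x y : R) : 0 <= x -> x <= y -> y <= pi -> cos y <= cos x.
Proof.
move=> x0 xy ypi; case: (eqVneq x y) => [-> //|nxy].
have xy' : x < y by rewrite lt_neqAle nxy.
apply: ltW; rewrite ltr_cos //; rewrite in_itv /= ?x0 ?ypi.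
- by rewrite (le_trans xy).
- by rewrite (le_trans x0).
Qed.

Lemma pow_small (R : realType) (g eta : R) : 0 <= g -> g < 1 -> 0 < eta ->
  exists m, g ^+ m < eta.
Proof.
move=> g0 g1 e0.
have hg : `|g| < 1 by rewrite ger0_norm.
have := @cvgr0_norm_lt _ _ _ _ _ _ (cvg_expr hg) _ e0.
case=> N _ HN; exists N; have := HN N (leqnn N).
by rewrite /= ger0_norm // exprn_ge0.
Qed.

Lemma sq_le (R : realType) (e d : R) : 0 <= e -> e <= `|d| -> e ^+ 2 <= d ^+ 2.
Proof.
move=> e0 ed; rewrite -(real_normK (num_real d)).
by apply: lerXn2r => //; rewrite nnegrE // (le_trans e0).
Qed.

Lemma sq_le' (R : realType) (d B : R) : `|d| <= B -> d ^+ 2 <= B ^+ 2.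
Proof.
move=> h; rewrite -(real_normK (num_real d)); apply: sq_le => //.
exact: le_trans h (ler_norm B).
Qed.

Lemma fip_core (R : realType) (E : topologicalType) (rho : E -> R) l
  (hm : exists2 m, 0 < m & forall x, m <= rho x)
  (hs : smooth_algebra_hom rho l) (d0 : R) (d00 : 0 < d0)
  (hd : forall g, Brho rho g -> wbound rho g d0 -> `|l g| < 1)
  (s : seq (E -> R)) (eps : R) (e0 : 0 < eps)
  (Cs : forall k, (k < size s)%N -> Cb (nth (fun _ => 0) s k)) :
  exists x, rho x <= d0^-1 /\ forall k, (k < size s)%N ->
    `|nth (fun _ => 0) s k x - l (nth (fun _ => 0) s k)| <= eps.
Proof.
apply: contrapT => H.
have hm' := hm; case: hm => mr mr0 hmr.
set n := size s.
pose f (j : 'I_n) := nth (fun _ => 0) s j.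
pose a (j : 'I_n) := l (f j).
have Cf : forall j, Cb (f j) by move=> j; apply: Cs; exact: ltn_ord.
have bad : forall x, rho x <= d0^-1 -> exists j : 'I_n, eps < `|f j x - a j|.
  move=> x Kx; apply: contrapT => nj; apply: H; exists x; split => // k kn.
  rewrite leNgt; apply/negP => hk; apply: nj; by exists (Ordinal kn).
have [M hM] : exists M : 'I_n -> R, forall j x, `|f j x| <= M j.
  by case: (choice (fun j => (Cf j).2)) => M hM; exists M.
pose B := eps + \sum_j (`|M j| + `|a j|).
have S0 : 0 <= \sum_j (`|M j| + `|a j|) by apply: sumr_ge0 => j _; rewrite addr_ge0.
have eB : eps <= B by rewrite /B lerDl.
have B0 : 0 < B by apply: lt_le_trans eB.
have hB : forall j x, `|f j x - a j| <= B.
  move=> j x; apply: (le_trans (ler_normB _ _)).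
  apply: (@le_trans _ _ (`|M j| + `|a j|)).
    by rewrite lerD2r; apply: le_trans (hM j x) _; exact: ler_norm.
  rewrite /B (bigD1 j) //=; apply: ler_wpDl; first exact: ltW.
  by apply: ler_wpDr => //; apply: sumr_ge0 => i _; rewrite addr_ge0.
pose X := (n.+1)%:R * B ^+ 2.
have X0 : 0 < X by rewrite /X mulr_gt0 // exprn_gt0.
pose kap := X^-1.
have kap0 : 0 < kap by rewrite invr_gt0.
have ke0 : 0 < kap * eps ^+ 2 by rewrite mulr_gt0 // exprn_gt0.
have B2X : B ^+ 2 <= X.
  rewrite /X -[leLHS]mul1r; apply: ler_wpM2r; first exact: sqr_ge0.
  by rewrite ler1n.
have ke1 : kap * eps ^+ 2 <= 1.
  rewrite /kap mulrC -ler_pdivlMr // ?invr_gt0 // invrK mul1r.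
  apply: le_trans B2X; apply: sq_le; first exact: ltW.
  by rewrite ger0_norm // ltW.
have pi1 : (1 : R) <= pi by apply: le_trans (pi_ge2 R); rewrite ler1n.
pose g := cos (kap * eps ^+ 2).
have g1 : g < 1.
  rewrite -cos0 /g ltr_cos // in_itv /= ?lexx ?pi_ge0 //.
  by rewrite (ltW ke0) (le_trans ke1).
have g0 : 0 <= g.
  apply: le_trans (ltW (cos1_gt0 R)) _; apply: cos_le_mono => //; exact: ltW.
have eta0 : 0 < d0 * mr by rewrite mulr_gt0.
case: (pow_small g0 g1 eta0) => m hgm.
pose Q (v : 'rV[R]_n) := kap * \sum_j (v ord0 j - a j) ^+ 2.
pose phi v := cos (Q v) ^+ m.
have Pphi : Pf phi.
  apply: Pf_pow; apply: Pcos; apply: (Pmul (Pcst _ kap)); apply: Pf_sum => j.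
  apply: (Pf_eq (Pmul (Padd (Pcoord _ j) (Pcst _ (- a j))) (Padd (Pcoord _ j) (Pcst _ (- a j))))).
  by move=> v; rewrite expr2.
have phib : forall v, `|phi v| <= 1.
  by move=> v; rewrite /phi normrX; apply: exprn_ile1 => //; exact: cos_max.
pose q := fun x => phi (\row_j f j x).
have lq : l q = 1.
  have := hs n phi f (Pf_smooth Pphi) (ex_intro _ 1 phib) (fun j => Cb_Brho hm' (Cf j)).
  rewrite /q => ->; rewrite /phi /Q big1 ?mulr0 ?cos0 ?expr1n //.
  by move=> j _; rewrite mxE subrr expr0n.
have Cq : Cb q.
  split; last by exists 1 => x; exact: phib.
  move=> x; apply: (@continuous_comp _ _ _ (fun x => \row_j f j x) phi).
    by apply: row_continuous => j; case: (Cf j).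
  by apply: differentiable_continuous; exact: Pf_diff.
have wq : wbound rho q d0.
  move=> x; case: (leP (rho x) d0^-1) => hx.
    case: (bad x hx) => j hj.
    have Qlo : kap * eps ^+ 2 <= Q (\row_j f j x).
      rewrite /Q ler_pM2l // (bigD1 j) //= mxE; apply: ler_wpDr.
        by apply: sumr_ge0 => i _; exact: sqr_ge0.
      by apply: sq_le; [exact: ltW | exact: ltW].
    have Qhi : Q (\row_j f j x) <= 1.
      rewrite /Q /kap mulrC -ler_pdivlMr // ?invr_gt0 // invrK mul1r.
      apply: (@le_trans _ _ (\sum_(j < n) B ^+ 2)).
        by apply: ler_sum => i _; rewrite mxE; apply: sq_le'; exact: hB.
      rewrite sumr_const card_ord /X -[B ^+ 2 *+ n]mulr_natl; apply: ler_wpM2r; first exact: sqr_ge0.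
      by rewrite ler_nat.
    have c0 : 0 <= cos (Q (\row_j f j x)).
      apply: le_trans (ltW (cos1_gt0 R)) _; apply: cos_le_mono => //.
      exact: le_trans (ltW ke0) Qlo.
    have cg : cos (Q (\row_j f j x)) <= g by apply: cos_le_mono => //; [exact: ltW | exact: le_trans pi1].
    rewrite /q /phi normrX ger0_norm //.
    apply: le_trans (lerXn2r _ _ _ cg) _; rewrite ?nnegrE //.
    apply: ltW; apply: lt_le_trans hgm _; apply: ler_wpM2l; [exact: ltW | exact: hmr].
  apply: le_trans (phib _) _.
  have : d0 * d0^-1 <= d0 * rho x by apply: ler_wpM2l; [exact: ltW | exact: ltW].
  by rewrite mulfV ?gt_eqF.
have := hd q (Cb_Brho hm' Cq) wq.
by rewrite lq normr1 ltxx.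
Qed.

Lemma forward (R : realType) (E : topologicalType) (rho : E -> R) l :
  hausdorff_space E -> admissible_weight rho -> cont_lin_functional rho l ->
  smooth_algebra_hom rho l -> exists x : E, forall f, Brho rho f -> l f = f x.
Proof.
move=> hE ha hl hs.
have hm := rho_min hE ha.
case: (l_small ha hl) => d0 d00 hd.
pose valid (i : seq (E -> R) * R) :=
  0 < i.2 /\ forall k, (k < size i.1)%N -> Cb (nth (fun _ => 0) i.1 k).
pose S (i : seq (E -> R) * R) := [set x | rho x <= d0^-1 /\ (valid i ->
  forall k, (k < size i.1)%N ->
    `|nth (fun _ => 0) i.1 k x - l (nth (fun _ => 0) i.1 k)| <= i.2)].
have [x Kx clx] : exists2 x, [set x | rho x <= d0^-1] x &
    forall i B, closed B -> S i `<=` B -> B x.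
  apply: (@directed_cluster _ _ _ S ([::], 1)).
  - by case: ha => _; apply.
  - move=> i j.
    case: (pselect (valid i)) => vi; case: (pselect (valid j)) => vj.
    + exists (i.1 ++ j.1, Num.min i.2 j.2) => y [Ky Hy].
      have vk : valid (i.1 ++ j.1, Num.min i.2 j.2).
        split; first by rewrite lt_min vi.1 vj.1.
        move=> k /=; rewrite nth_cat size_cat => kn.
        case: ifP => hk; first exact: vi.2.
        by apply: vj.2; rewrite -(ltn_add2l (size i.1)) subnKC // leqNgt hk.
      split; split => // _ k kn.
        have := Hy vk k; rewrite /= size_cat nth_cat kn => /(_ (ltn_addr _ kn)).
        by move=> h; apply: le_trans h _; rewrite ge_min lexx.
      have hlt : ((size i.1 + k)%N < size i.1)%N = false by rewrite ltnNge leq_addr.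
      have := Hy vk (size i.1 + k)%N; rewrite /= size_cat nth_cat hlt addKn.
      by rewrite ltn_add2l => /(_ kn) h; apply: le_trans h _; rewrite ge_min lexx orbT.
    + by exists i => y [Ky Hy]; split; split => // /vj.
    + by exists j => y [Ky Hy]; split; split => // /vi.
    + by exists i => y [Ky Hy]; split; split => // /vj.
  - move=> i; case: (pselect (valid i)) => vi.
      case: (fip_core hm hs d00 hd vi.1 vi.2) => y [Ky Hy].
      by exists y; split.
    case: (@fip_core _ _ _ _ hm hs _ d00 hd [::] 1 ltr01) => // y [Ky _].
    by exists y; split => // /vi.
  - by move=> y [].
exists x; apply: (Cb_ext ha hl hm) => g Cg.
apply/subr0_eq/eqP; rewrite -normr_le0; apply/ler_addgt0Pr => e e0; rewrite add0r distrC.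
pose B := (fun y => `|g y - l g|) @^-1` [set r | r <= e].
have cB : closed B.
  apply: preimage_closed; last exact: closed_le.
  move=> y _; apply: cvg_norm; apply: cvgB; last exact: cvg_cst.
  by case: Cg => cg _; exact: cg.
apply: (clx ([:: g], e) B cB) => y [Ky Hy].
have vg : valid ([:: g], e).
  by split => // k; rewrite /= ltnS leqn0 => /eqP ->.
exact: (Hy vg 0%N erefl).
Qed.

Lemma directed_cluster_nbhs (T : topologicalType) (K : set T) (I : Type) (S : I -> set T) (i0 : I) :
  compact K -> (forall i j, exists k, S k `<=` S i `&` S j) -> (forall i, S i !=set0) ->
  S i0 `<=` K ->
  exists2 x, K x & forall i N, nbhs x N -> S i `&` N !=set0.
Proof.
move=> Kc dir ne SK.
pose F := fun A => exists i, S i `<=` A.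
have PF : ProperFilter F.
  constructor.
    by move=> [i Hi]; case: (ne i) => x /Hi.
  constructor.
  - by exists i0.
  - move=> A B [i Ai] [j Bj]; case: (dir i j) => k Hk; exists k => y /Hk [/Ai ? /Bj ?].
    by split.
  - by move=> A B AB [i Ai]; exists i => y /Ai /AB.
have FK : F K by exists i0.
case: (Kc F PF FK) => x [Kx clx]; exists x => // i N hN.
by apply: clx => //; exists i.
Qed.

Lemma inv1_small (R : realType) (a : R) : 0 < a -> (1 + `|a^-1|)^-1 < a.
Proof.
move=> a0; rewrite gtr0_norm ?invr_gt0 // -div1r ltr_pdivrMr ?ltr_pwDl ?invr_gt0 //.
rewrite mulrDr mulr1 mulfV ?gt_eqF //; try lra.
by rewrite invr_ge0 ltW.
Qed.

Lemma unif_cont (R : realType) n (phi : 'rV[R]_n -> R) (C : set 'rV[R]_n) :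
  compact C -> continuous phi -> forall eta, 0 < eta ->
  exists2 d, 0 < d & forall v w, C v -> `|v - w| < d -> `|phi v - phi w| < eta.
Proof.
move=> Cc cphi eta eta0; apply: contrapT => H.
have H' : forall d, 0 < d -> exists v w, C v /\ `|v - w| < d /\ eta <= `|phi v - phi w|.
  move=> d d0; apply: contrapT => nv; apply: H; exists d => // v w Cv vw.
  rewrite ltNge; apply/negP => hv; apply: nv; exists v, w; by split.
pose S (d : R) := [set v | C v /\ exists w, `|v - w| < (1 + `|d|)^-1 /\ eta <= `|phi v - phi w|].
have [v0 Cv0 clv] : exists2 v0, C v0 & forall i N, nbhs v0 N -> S i `&` N !=set0.
  apply: (@directed_cluster_nbhs _ _ _ S 0) => //.
  - move=> i j; exists (`|i| + `|j|) => y [Cy [w [hw1 hw2]]]; split; split => //.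
      exists w; split => //; apply: (lt_le_trans hw1); apply: inv1_le.
      by rewrite [`|_ + _|]ger0_norm ?addr_ge0 // lerDl.
    exists w; split => //; apply: (lt_le_trans hw1); apply: inv1_le.
    by rewrite [`|_ + _|]ger0_norm ?addr_ge0 // lerDr.
  - move=> i; case: (H' _ (inv1_gt0 i)) => v [w [Cv [h1 h2]]].
    by exists v; split => //; exists w.
  - by move=> y [].
have e20 : 0 < eta / 2 by rewrite divr_gt0.
have := @cvgr_dist_lt _ _ _ _ _ phi (phi v0) (cphi v0) _ e20.
move=> /(_ _) hN; have [r r0 hr] := (nbhs_ballP _ _).1 hN.
have r20 : 0 < r / 2 by rewrite divr_gt0.
have Nb : nbhs v0 (ball v0 (r / 2)) by apply: nbhsx_ballx.
case: (clv ((r / 2)^-1) _ Nb) => v [[Cv [w [hw1 hw2]]] hv].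
have hw1' : `|v - w| < r / 2 by apply: lt_trans hw1 _; exact: inv1_small.
move: hv; rewrite -ball_normE /= => hv.
have h1 : `|phi v0 - phi v| < eta / 2 by apply: hr; rewrite -ball_normE /=; lra.
have h2 : `|phi v0 - phi w| < eta / 2.
  apply: hr; rewrite -ball_normE /=.
  have -> : v0 - w = (v0 - v) + (v - w) by rewrite addrA subrK.
  apply: le_lt_trans (ler_normD _ _) _; lra.
have : `|phi v - phi w| < eta.
  have -> : phi v - phi w = (phi v0 - phi w) - (phi v0 - phi v) by ring.
  apply: le_lt_trans (ler_normB _ _) _; lra.
by rewrite ltNge hw2.
Qed.

Lemma bounded_ball (R : realType) n (r : R) : compact [set v : 'rV[R]_n | `|v| <= r].
Proof.
apply: bounded_closed_compact.
  exists r; split; first exact: num_real.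
  by move=> M hM v hv; rewrite /= (le_trans hv) // ltW.
apply: (@preimage_closed _ _ (@Num.norm _ 'rV[R]_n) [set x | x <= r]).
  by move=> v _; exact: norm_continuous.
exact: closed_le.
Qed.

Lemma comp_Brho (R : realType) (E : topologicalType) (rho : E -> R)
  (hm : exists2 m, 0 < m & forall x, m <= rho x)
  n (phi : 'rV[R]_n -> R) (f : 'I_n -> E -> R) :
  continuous phi -> (exists M, forall v, `|phi v| <= M) -> (forall i, Brho rho (f i)) ->
  Brho rho (fun x => phi (\row_i f i x)).
Proof.
move=> cphi [M hM] Bf; case: hm => mr mr0 hmr.
have rpos : forall x, 0 < rho x by move=> x; exact: lt_le_trans (hmr x).
have M0 : 0 <= M := le_trans (normr_ge0 _) (hM 0).
have Mbound : forall x, M <= M / mr * rho x.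
  move=> x; apply: (@le_trans _ _ (M / mr * mr)); first by rewrite divfK ?gt_eqF.
  apply: ler_wpM2l; last exact: hmr.
  by rewrite divr_ge0 // ltW.
split.
  by exists (M / mr) => x; apply: le_trans (hM _) (Mbound x).
move=> e e0.
have [c hc] : exists c : 'I_n -> R, forall i, wbound rho (f i) (c i).
  by case: (choice (fun i => (Bf i).1)) => c hc; exists c.
pose C := \sum_i `|c i|.
have C0 : 0 <= C by apply: sumr_ge0 => i _.
have hcC : forall i x, `|f i x| <= C * rho x.
  move=> i x; apply: le_trans (hc i x) _; apply: ler_wpM2r; first exact: ltW.
  apply: le_trans (ler_norm _) _; rewrite /C (bigD1 i) //=; apply: ler_wpDr => //.
  by apply: sumr_ge0 => j _.
pose R0 := (M *+ 2 + 1) / e.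
have R00 : 0 < R0 by rewrite divr_gt0 // ltr_wpDl // mulrn_wge0.
have Cc := @bounded_ball R n (C * R0).
have eta0 : 0 < e * mr by rewrite mulr_gt0.
case: (unif_cont Cc cphi eta0) => d d0 hd.
pose dl := d / (R0 *+ 2).
have dl0 : 0 < dl by rewrite divr_gt0 // mulrn_wgt0.
have [g hg] : exists g : 'I_n -> E -> R, forall i, Cb (g i) /\ wbound rho (f i \- g i) dl.
  by case: (choice (fun i => (Bf i).2 dl dl0)) => g hg; exists g.
exists (fun x => phi (\row_i g i x)); split.
  split; last by exists M.
  move=> x; apply: (@continuous_comp _ _ _ (fun x => \row_i g i x) phi).
    by apply: row_continuous => i; case: (hg i) => [[]].
  exact: cphi.
move=> x /=.
case: (leP (rho x) R0) => hx.
  have Cv : `|\row_i f i x| <= C * R0.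
    apply: norm_le_coord; first by rewrite mulr_ge0 // ltW.
    move=> i; rewrite mxE; apply: le_trans (hcC i x) _.
    by apply: ler_wpM2l.
  have dv : `|\row_i f i x - \row_i g i x| < d.
    apply: le_lt_trans (@norm_le_coord _ _ _ (dl * R0) _ _) _.
    - by rewrite mulr_ge0 // ltW.
    - move=> i; rewrite !mxE; apply: le_trans ((hg i).2 x) _.
      by apply: ler_wpM2l => //; exact: ltW.
    - rewrite /dl -mulr_natr.
      have -> : d / (R0 * 2%:R) * R0 = d / 2 by field; rewrite gt_eqF.
      lra.
  apply: ltW; apply: lt_le_trans (hd _ _ Cv dv) _.
  by rewrite ler_pM2l.
apply: le_trans (ler_normB _ _) _.
apply: (@le_trans _ _ (M *+ 2)); first by rewrite mulr2n lerD.
have : (M *+ 2 + 1) / e * e < rho x * e by rewrite ltr_pM2r.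
rewrite divfK ?gt_eqF // mulrC => h; lra.
Qed.

Lemma uniq_pt (R : realType) (E : topologicalType) (rho : E -> R) (l : (E -> R) -> R) :
  completely_regular_space E -> hausdorff_space E -> admissible_weight rho ->
  forall x y : E, (forall f, Brho rho f -> l f = f x) ->
     (forall f, Brho rho f -> l f = f y) -> x = y.
Proof.
move=> hcr hE ha x y hx hy; apply: contrapT => nxy.
have hm := rho_min hE ha.
have cly : closed [set y] by apply: accessible_closed_set1; exact: hausdorff_accessible.
have nyx : ~ [set y] x by move=> /= h; apply: nxy.
have := hcr x [set y] cly nyx.
move/(@uniform_separatorP _ R) => [f [cf rf f0 f1]].
have fx : f x = 0 by apply: f0; exists x.
have fy : f y = 1 by apply: f1; exists y.
have Cf : Cb f.
  split => //; exists 1 => z.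
  have : `[0, 1]%classic (f z) by apply: rf; exists z.
  rewrite /= in_itv /= => /andP [h0 h1].
  by rewrite ger0_norm.
have Bf := Cb_Brho hm Cf.
have := hx f Bf; rewrite hy // fx fy => /eqP; rewrite oner_eq0.
by [].
Qed.

Lemma reverse (R : realType) (E : topologicalType) (rho : E -> R) (l : (E -> R) -> R) :
  hausdorff_space E -> admissible_weight rho ->
  (exists x : E, forall f, Brho rho f -> l f = f x) -> smooth_algebra_hom rho l.
Proof.
move=> hE ha [x hx] n phi f hsm hb Bf.
have hm := rho_min hE ha.
have cphi : continuous phi := hsm 0%N.
rewrite hx; last exact: comp_Brho.
by congr phi; apply/rowP => i; rewrite !mxE hx.
Qed.

Unset Implicit Arguments.

Theorem mainTheorem13 (R : realType) (E : topologicalType) (rho : E -> R)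
  (l : (E -> R) -> R) :
  completely_regular_space E -> hausdorff_space E ->
  admissible_weight rho -> cont_lin_functional rho l ->
  (smooth_algebra_hom rho l <->
     exists x : E, forall f, Brho rho f -> l f = f x) /\
  (forall x y : E, (forall f, Brho rho f -> l f = f x) ->
     (forall f, Brho rho f -> l f = f y) -> x = y).
Proof.
move=> hcr hE ha hl; split; last exact: uniq_pt.
split; first exact: forward.
exact: reverse.
Qed.
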